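(* Let $q\in\mathbb{C}$ with $0<|q|<1$, and let $a,b,c,d,e$ be complex numbers such that at least one of $a$, $b$, $c$ is of the form $q^n$ with $n\in\{1,2,\ldots\}$ (and such that all terms below are well defined). Then \[ \sum_{k=-\infty}^\infty \frac{(q/a,q/b,q/c,q/d,q/e)_k}{(a,b,c,d,e)_k}(abcdeq^{-3})^k =\frac{(q,ab/q,bc/q,ac/q)_\infty}{(a,b,c,abc/q^2)_\infty} \sum_{k=0}^\infty\frac{(q/a,q/b,q/c,de/q)_k}{(q,q^3/abc,d,e)_k}q^k, \] and \[ \sum_{k=-\infty}^\infty \frac{(q/a,q/b,q/c,q/d,q/e)_k}{(aq,bq,cq,dq,eq)_k}(abcdeq^{-1})^k =\frac{(q,ab,bc,ac)_\infty}{(aq,bq,cq,abc/q)_\infty} \sum_{k=0}^\infty\frac{(q/a,q/b,q/c,de)_k}{(q,q^2/abc,dq,eq)_k}q^k. \]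
   Context: For an integer $n$, the $q$-shifted factorial is $(a)_n=(a;q)_n$ with $(a)_0=1$, $(a)_n=(1-a)(1-aq)\cdots(1-aq^{n-1})$ for $n\ge1$, and $(a)_n=[(1-aq^{-1})(1-aq^{-2})\cdots(1-aq^{n})]^{-1}$ for $n\le -1$. In particular $1/(q)_n=0$ for $n<0$. Also $(a_1,\ldots,a_m)_n=(a_1)_n\cdots(a_m)_n$ and $(a_1,\ldots,a_m)_\infty=\lim_{n\to\infty}(a_1,\ldots,a_m)_n$. *)

(* Defs.v *)
From Stdlib Require Import Reals ZArith.
From Coquelicot Require Import Coquelicot.
Open Scope C_scope.

Fixpoint qprod_pos (a q : C) (n : nat) : C :=
  match n with
  | O => 1
  | S m => qprod_pos a q m * (1 - a * Cpow q m)
  end.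

Fixpoint qprod_neg (a q : C) (m : nat) : C :=
  match m with
  | O => 1
  | S m' => qprod_neg a q m' * (1 - a / Cpow q (S m'))
  end.

Definition qpoch (a q : C) (k : Z) : C :=
  match k with
  | Zneg p => / qprod_neg a q (Pos.to_nat p)
  | _ => qprod_pos a q (Z.to_nat k)
  end.

(* 1/(a;q)_k, with the paper's convention: for k < 0 it is the product
   (1-a/q)...(1-a q^k) itself (so e.g. 1/(q)_k = 0 for k < 0). *)
Definition qpoch_rec (a q : C) (k : Z) : C :=
  match k with
  | Zneg p => qprod_neg a q (Pos.to_nat p)
  | _ => / qprod_pos a q (Z.to_nat k)
  end.

Definition qpoch_def (a q : C) (k : Z) : Prop :=
  match k with
  | Zneg p => qprod_neg a q (Pos.to_nat p) <> 0
  | _ => True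
  end.

Definition qpoch_rec_def (a q : C) (k : Z) : Prop :=
  match k with
  | Zneg _ => True
  | _ => qprod_pos a q (Z.to_nat k) <> 0
  end.

Definition qpoch_inf (a q : C) : C :=
  lim (T := C_CompleteNormedModule) (filtermap (fun n => qprod_pos a q n) eventually).

Definition Czpow (z : C) (k : Z) : C :=
  match k with
  | Zneg p => / Cpow z (Pos.to_nat p)
  | _ => Cpow z (Z.to_nat k)
  end.

Definition is_bilateral_series (f : Z -> C) (L : C) : Prop :=
  exists L1 L2 : C,
    is_series (fun n : nat => f (Z.of_nat n)) L1 /\
    is_series (fun n : nat => f (- Z.of_nat (S n))%Z) L2 /\
    L = L1 + L2.

(* Main.v *)
Require Import Defs.
From Stdlib Require Import Reals ZArith Lia Lra.
From Coquelicot Require Import Coquelicot.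
Open Scope C_scope.


Fixpoint csum (f : nat -> C) (n : nat) : C :=
  match n with O => 0 | S n => csum f n + f n end.

Lemma csum_S f n : csum f (S n) = csum f n + f n.
Proof. reflexivity. Qed.

Lemma csum_ext f g n : (forall i, (i < n)%nat -> f i = g i) -> csum f n = csum g n.
Proof. induction n; intros H; simpl; auto. rewrite IHn by (intros; apply H; lia). rewrite H by lia. auto. Qed.

Lemma csum_minus f g n : csum (fun i => f i - g i) n = csum f n - csum g n.
Proof. induction n; simpl. ring. rewrite IHn. ring. Qed.

Lemma csum_plus f g n : csum (fun i => f i + g i) n = csum f n + csum g n.
Proof. induction n; simpl. ring. rewrite IHn. ring. Qed.

Lemma csum_scal c f n : csum (fun i => c * f i) n = c * csum f n.
Proof. induction n; simpl. ring. rewrite IHn. ring. Qed.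

Lemma csum_zero f n : (forall i, (i < n)%nat -> f i = 0) -> csum f n = 0.
Proof. induction n; intros H; simpl; auto. rewrite IHn by (intros; apply H; lia). rewrite H by lia. ring. Qed.

Lemma swap (f : nat -> nat -> C) n :
  csum (fun j => csum (fun r => f j r) (S j)) (S n) =
  csum (fun r => csum (fun i => f (r+i)%nat r) (S (n - r))) (S n).
Proof.
  induction n.
  - simpl. reflexivity.
  - rewrite csum_S, IHn. rewrite (csum_S (fun r => csum (fun i => f (r + i)%nat r) (S (S n - r)))).
    rewrite (csum_ext (fun r => csum (fun i => f (r + i)%nat r) (S (S n - r)))
       (fun r => csum (fun i => f (r + i)%nat r) (S (n - r)) + f (S n) r)).
    + rewrite csum_plus. rewrite Nat.sub_diag. rewrite (csum_S (fun r => f (S n) r) (S n)).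
      replace (csum (fun i => f (S n + i)%nat (S n)) 1) with (f (S n) (S n)).
      rewrite Cplus_assoc; reflexivity. simpl. rewrite Nat.add_0_r. ring.
    + intros i Hi. replace (S n - i)%nat with (S (n - i)) by lia. rewrite csum_S.
      replace (i + S (n - i))%nat with (S n) by lia. reflexivity.
Qed.

Lemma Cmult_neq_0_inv a b : a * b <> 0 -> a <> 0 /\ b <> 0.
Proof. intros H; split; intro E; apply H; rewrite E; ring. Qed.

Section QP.
Variable q : C.
Local Notation P x k := (qprod_pos x q k).
Local Notation Q k := (qprod_pos q q k).

Lemma P_S x k : P x (S k) = P x k * (1 - x * Cpow q k).
Proof. reflexivity. Qed.

Lemma P_add x m k : P x (m + k) = P x m * P (x * Cpow q m) k.
Proof.
  induction k; simpl. rewrite Nat.add_0_r. ring.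
  rewrite Nat.add_succ_r. simpl. rewrite IHk, Cpow_add_r. ring.
Qed.

Lemma P_nz z n : (forall k, 1 - z * Cpow q k <> 0) -> P z n <> 0.
Proof. intros H; induction n; simpl. intro E; injection E; lra. apply Cmult_neq_0; auto. Qed.

Lemma P_nz_le z n m : (m <= n)%nat -> P z n <> 0 -> P z m <> 0.
Proof. intros Hle H. replace n with (m + (n - m))%nat in H by lia.
  rewrite P_add in H. apply Cmult_neq_0_inv in H. tauto. Qed.

Lemma P_fact_nz z n k : (k < n)%nat -> P z n <> 0 -> 1 - z * Cpow q k <> 0.
Proof. intros Hk H. apply (P_nz_le z n (S k)) in H; [|lia]. rewrite P_S in H.
  apply Cmult_neq_0_inv in H. tauto. Qed.

Hypothesis HQ : forall k, Q k <> 0.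

Lemma HQS k : 1 - q * Cpow q k <> 0.
Proof. apply (P_fact_nz q (S k)); auto. Qed.

Definition s2 x y l i j :=
  P x i * P y i * P l j * Cpow l i / (Q i * Q j * P (l*x*y) i).

Definition Dm x y l m := (1 - q * Cpow q m) * (1 - l*x*y * Cpow q m).
Definition rho x y l m := (1 - l*y*Cpow q m) * (1 - l*x*Cpow q m) / Dm x y l m.

Definition G2 x y l k j : C :=
  match k with O => 0
  | S k' => - Cpow q j * (1 - Cpow q k) * (1 - l*x*y * Cpow q k') / Dm x y l (k' + j) * s2 x y l k j end.

Section S.
Variables x y l : C.
Hypothesis Hg : forall k, 1 - l*x*y * Cpow q k <> 0.

Lemma local k j :
  G2 x y l (S k) j - G2 x y l k (S j) = s2 x y l k (S j) - rho x y l (k + j) * s2 x y l k j.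
Proof.
  assert (HP : forall n, P (l*x*y) n <> 0) by (intros; apply P_nz; auto).
  unfold G2, rho, Dm, s2. destruct k as [|k].
  - simpl. pose proof (Hg 0) as H0. pose proof (HQS 0) as H1. simpl in H0, H1.
    rewrite Cmult_1_r in H0, H1.
    field. repeat split; auto using HQS.
  - replace (k + S j)%nat with (S k + j)%nat by lia.
    simpl P. rewrite !Cpow_add_r. simpl Cpow.
    pose proof (Hg k). pose proof (Hg (S k)). pose proof (HQS k). pose proof (HQS (S k)).
    pose proof (HQS j). pose proof (Hg (S k + j)%nat) as H5. pose proof (HQS (S k + j)%nat) as H6.
    rewrite Cpow_add_r in H5, H6. simpl Cpow in *.
    field. repeat split; auto.
Qed.

Lemma partial m k : (k <= S m)%nat ->
  csum (fun i => s2 x y l i (S m - i) - rho x y l m * s2 x y l i (m - i)) k = G2 x y l k (S m - k).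
Proof.
  induction k; intros Hk.
  - simpl. reflexivity.
  - rewrite csum_S, IHk by lia.
    set (j := (m - k)%nat).
    replace (S m - k)%nat with (S j) by (unfold j; lia).
    replace (S m - S k)%nat with j by (unfold j; lia).
    replace (rho x y l m) with (rho x y l (k + j)) by (f_equal; unfold j; lia).
    pose proof (local k j). rewrite <- H. ring.
Qed.

Lemma saal m :
  csum (fun i => s2 x y l i (m - i)) (S m) = P (l*x) m * P (l*y) m / (Q m * P (l*x*y) m).
Proof.
  assert (HP : forall n, P (l*x*y) n <> 0) by (intros; apply P_nz; auto).
  induction m.
  - simpl. unfold s2. simpl. field.
  - pose proof (partial m (S m) (le_n _)) as H.
    rewrite csum_minus, csum_scal in H.
    replace (S m - S m)%nat with 0%nat in H by lia.
    change (csum (fun i => s2 x y l i (S m - i)) (S (S m))) with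
      (csum (fun i => s2 x y l i (S m - i)) (S m) + s2 x y l (S m) (S m - S m)).
    replace (S m - S m)%nat with 0%nat by lia.
    assert (E : csum (fun i => s2 x y l i (S m - i)) (S m) = rho x y l m * csum (fun i => s2 x y l i (m - i)) (S m) + G2 x y l (S m) 0).
    { rewrite <- H. ring. }
    rewrite E, IHm. unfold G2, rho, Dm, s2. rewrite Nat.add_0_r. simpl P. simpl Cpow.
    pose proof (Hg m). pose proof (HQS m).
    field. repeat split; auto.
Qed.
End S.

Fixpoint w r : C := match r with O => 1 | S r' => - Cpow q r' * w r' end.

Definition cc t r : C := match r with O => 1
  | S r' => P t r' * (1 - t * Cpow q (2*r'+1)) / Q (S r') end.

Definition ua t r := cc t r * w r.

Section F2.
Variable t : C.
Hypothesis Ht : forall k, 1 - t * Cpow q k <> 0.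

Definition Tn n i := ua t i / (Q (n - i) * P t (n + i)).
Definition Hf r' j := - w (S r') * P t r' / ((1 - Cpow q (S r' + j)) * Q r' * Q j * P t (S r' + r' + j)).

Lemma F2_loc r' j : Hf r' (S j) + ua t (S r') / (Q (S j) * P t (S (S r') + j + S r')) = Hf (S r') j.
Proof.
  assert (HP : forall n, P t n <> 0) by (intros; apply P_nz; auto).
  unfold Hf, ua, cc.
  replace (S (S r') + j + S r')%nat with (S (S r' + r' + S j)) by lia.
  replace (S (S r') + S r' + j)%nat with (S (S r' + r' + S j)) by lia.
  replace (S r' + S j)%nat with (S (S (r' + j))) by lia.
  replace (S (S r') + j)%nat with (S (S (r' + j))) by lia.
  replace (2 * r' + 1)%nat with (S (r' + r')) by lia.
  pose proof (HP (S r' + r' + S j)%nat). pose proof (Ht (S r' + r' + S j)%nat) as H1.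
  pose proof (HQS r') as H2. pose proof (HQS j) as H3. pose proof (HQS (S (r'+j))) as H4.
  replace (S r' + r' + S j)%nat with (S (S (r' + r' + j))) in * by lia.
  pose proof (Ht (S (r' + r' + j))) as H5. pose proof (Ht (r' + r' + j)) as H6.
  pose proof (HP (r' + r' + j)%nat) as H7.
  simpl P. simpl w. simpl Cpow in *. rewrite !Cpow_add_r in *.
  field. repeat split; auto.
Qed.

Lemma F2_part n' r : (1 <= r <= S n')%nat -> csum (Tn (S n')) r = Hf (r - 1) (S n' - r).
Proof.
  assert (HP : forall n, P t n <> 0) by (intros; apply P_nz; auto).
  induction r; intros Hr. lia.
  destruct r as [|r'].
  - simpl. unfold Tn, Hf, ua, cc. simpl w. rewrite Nat.sub_0_r, Nat.add_0_r.
    replace (S n' - 1)%nat with n' by lia. simpl Nat.add. simpl P.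
    pose proof (HQS n'). pose proof (HP (S n')). simpl P in H0.
    rewrite !Nat.sub_0_r. simpl Cpow. field. repeat split; auto.
  - rewrite csum_S, IHr by lia.
    set (j := (S n' - S (S r'))%nat).
    replace (S n' - S r')%nat with (S j) by (unfold j; lia).
    replace (S (S r') - 1)%nat with (S r') by lia.
    replace (S r' - 1)%nat with r' by lia.
    rewrite <- F2_loc. unfold Tn. 
    replace (S n' - S r')%nat with (S j) by (unfold j; lia).
    replace (S n' + S r')%nat with (S (S r') + j + S r')%nat by (unfold j; lia).
    reflexivity.
Qed.

Lemma F2 n : csum (Tn n) (S n) = match n with O => 1 | S _ => 0 end.
Proof.
  assert (HP : forall n, P t n <> 0) by (intros; apply P_nz; auto).
  destruct n as [|n'].
  - simpl. unfold Tn, ua, cc. simpl. field.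
  - rewrite csum_S, F2_part by lia. replace (S n' - 1)%nat with n' by lia.
    rewrite Nat.sub_diag. unfold Tn, Hf, ua, cc. rewrite Nat.sub_diag, Nat.add_0_r.
    replace (S n' + S n')%nat with (S (S n' + n')) by lia.
    replace (2 * n' + 1)%nat with (S n' + n')%nat by lia.
    pose proof (HQS n'). pose proof (Ht (S n' + n')%nat). pose proof (HP (S n' + n')%nat).
    simpl P. simpl w. simpl Cpow.
    rewrite !Nat.add_0_r. pose proof (Ht (n'+n')%nat). pose proof (HP (n'+n')%nat). pose proof (Ht (S (n'+n'))). simpl Cpow in *. field. repeat split; auto.
Qed.
End F2.

Section BL.
Variables t r1 r2 m1 m2 l : C.
Hypothesis Ht : forall k, 1 - t * Cpow q k <> 0.
Hypothesis Hm1 : l * r2 = m1.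
Hypothesis Hm2 : l * r1 = m2.
Hypothesis Htl : l * r1 * r2 = t.

Definition coef n j := P r1 j * P r2 j * P l (n - j) * Cpow l j / (Q (n - j) * P m1 n * P m2 n).
Definition uu r := P r1 r * P r2 r * Cpow l r / (P m1 r * P m2 r).

Lemma innerI n r : (r <= n)%nat -> P m1 n <> 0 -> P m2 n <> 0 ->
  csum (fun i => coef n (r+i) / (Q i * P t (r+i+r))) (S (n-r)) = uu r / (Q (n-r) * P t (n+r)).
Proof.
  intros Hr Hn1 Hn2.
  assert (HP : forall n, P t n <> 0) by (intros; apply P_nz; auto).
  set (m := (n - r)%nat). replace n with (r + m)%nat in * by (unfold m; lia).
  clearbody m. clear Hr.
  assert (E : l * (r1 * Cpow q r) * (r2 * Cpow q r) = t * Cpow q (r + r)) by (rewrite Cpow_add_r, <- Htl; ring).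
  assert (Hg : forall k, 1 - l * (r1 * Cpow q r) * (r2 * Cpow q r) * Cpow q k <> 0).
  { intros k. rewrite E, <- Cmult_assoc, <- Cpow_add_r. apply Ht. }
  assert (HP2 : forall n, P (t * Cpow q (r+r)) n <> 0).
  { intros; apply P_nz; intros k; rewrite <- Cmult_assoc, <- Cpow_add_r. apply Ht. }
  set (K := P r1 r * P r2 r * Cpow l r / (P m1 (r+m) * P m2 (r+m) * P t (r+r))).
  rewrite (csum_ext _ (fun i => K * s2 (r1 * Cpow q r) (r2 * Cpow q r) l i (m - i))).
  - rewrite csum_scal, saal by auto. unfold K, uu.
    rewrite E. rewrite (P_add m1), (P_add m2) in *. replace (r + m + r)%nat with ((r + r) + m)%nat by lia.
    rewrite (P_add t (r+r) m).
    replace (m1 * Cpow q r) with (l * (r2 * Cpow q r)) in * by (rewrite <- Hm1; ring).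
    replace (m2 * Cpow q r) with (l * (r1 * Cpow q r)) in * by (rewrite <- Hm2; ring).
    apply Cmult_neq_0_inv in Hn1. apply Cmult_neq_0_inv in Hn2.
    field. destruct Hn1, Hn2. repeat split; auto.
  - intros i Hi. unfold coef, K, s2. rewrite E.
    replace (r + m - (r + i))%nat with (m - i)%nat by lia.
    replace (r + i + r)%nat with ((r + r) + i)%nat by lia.
    rewrite (P_add r1 r i), (P_add r2 r i), (P_add t (r+r) i), (Cpow_add_r l r i).
    field. repeat split; auto.
Qed.

Lemma bailey (al : nat -> C) n : P m1 n <> 0 -> P m2 n <> 0 ->
  csum (fun j => coef n j * csum (fun r => al r / (Q (j - r) * P t (j + r))) (S j)) (S n)
  = csum (fun r => uu r * al r / (Q (n - r) * P t (n + r))) (S n).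
Proof.
  intros Hn1 Hn2.
  assert (HP : forall n, P t n <> 0) by (intros; apply P_nz; auto).
  transitivity (csum (fun j => csum (fun r => coef n j * (al r / (Q (j - r) * P t (j + r)))) (S j)) (S n)).
  { apply csum_ext; intros; rewrite csum_scal; reflexivity. }
  rewrite (swap (fun j r => coef n j * (al r / (Q (j - r) * P t (j + r))))).
  apply csum_ext; intros r Hr.
  transitivity (al r * csum (fun i => coef n (r+i) / (Q i * P t (r+i+r))) (S (n-r))).
  { rewrite <- csum_scal. apply csum_ext. intros i Hi. replace (r+i-r)%nat with i by lia. field. split; auto. }
  rewrite innerI by (auto; lia). field. split; auto.
Qed.

End BL.

Lemma csum_delta (f : nat -> C) j :
  csum (fun j' => f j' * match j' with O => 1 | S _ => 0 end) (S j) = f O.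
Proof. induction j. simpl. ring. rewrite csum_S, IHj. ring. Qed.

Section W.
Variables t B C D E lB lD mB mC mD mE : C.
Hypothesis Ht : forall k, 1 - t * Cpow q k <> 0.
Hypothesis HmB : lB * C = mB.
Hypothesis HmC : lB * B = mC.
Hypothesis HtB : lB * B * C = t.
Hypothesis HmD : lD * E = mD.
Hypothesis HmE : lD * D = mE.
Hypothesis HtD : lD * D * E = t.

Lemma step1 j : P mD j <> 0 -> P mE j <> 0 ->
  P lD j / (Q j * P mD j * P mE j) =
  csum (fun r => (uu D E mD mE lD r * ua t r) / (Q (j - r) * P t (j + r))) (S j).
Proof.
  intros H1 H2.
  rewrite <- (bailey t D E mD mE lD Ht HmD HmE HtD (ua t) j H1 H2).
  rewrite (csum_ext _ (fun j' => coef D E mD mE lD j j' * match j' with O => 1 | S _ => 0 end)).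
  - rewrite csum_delta. unfold coef. rewrite Nat.sub_0_r. simpl. field. repeat split; auto.
  - intros i Hi. f_equal. rewrite <- (F2 t Ht i). reflexivity.
Qed.

Lemma watsonW N : P mB N <> 0 -> P mC N <> 0 -> P mD N <> 0 -> P mE N <> 0 ->
  csum (fun j => coef B C mB mC lB N j * (P lD j / (Q j * P mD j * P mE j))) (S N) =
  csum (fun r => uu B C mB mC lB r * (uu D E mD mE lD r * ua t r) / (Q (N - r) * P t (N + r))) (S N).
Proof.
  intros H1 H2 H3 H4.
  rewrite <- (bailey t B C mB mC lB Ht HmB HmC HtB (fun r => uu D E mD mE lD r * ua t r) N H1 H2).
  apply csum_ext. intros j Hj. f_equal. apply step1; apply (P_nz_le _ N); auto; lia.
Qed.
End W.

Hypothesis Hq0 : q <> 0.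

Lemma w_nz r : w r <> 0.
Proof. induction r; simpl. intro E; injection E; lra. apply Cmult_neq_0; auto.
  intro E. apply (Cpow_nz q r Hq0). replace (Cpow q r) with (- (- Cpow q r)) by ring. rewrite E. ring. Qed.

Lemma conv1 r s : Q (r + s) * w r = P (q / Cpow q (S (r + s))) r * Cpow (Cpow q (r + s)) r * Q s.
Proof.
  revert s; induction r; intros s.
  - simpl. ring.
  - pose proof (IHr (S s)) as IH. replace (r + S s)%nat with (S (r + s)) in IH by lia.
    replace (S r + s)%nat with (S (r + s)) by lia.
    simpl w. simpl P in *. simpl Cpow in *. rewrite Cpow_add_r in *.
    pose proof (Cpow_nz q r Hq0). pose proof (Cpow_nz q s Hq0).
    transitivity (- Cpow q r * (Q (r + s) * (1 - q * (Cpow q r * Cpow q s)) * w r)). ring.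
    rewrite IH. field. repeat split; auto.
Qed.

Lemma conv3 (x : C) j s : x <> 0 ->
  P x s * Cpow x j * Q (j + s) * P (q / (x * Cpow q (j + s))) j =
  P x (j + s) * P (q / Cpow q (S (j + s))) j * Cpow q j * Q s.
Proof.
  intros Hx. revert s; induction j; intros s.
  - simpl. ring.
  - pose proof (IHj (S s)) as IH. replace (j + S s)%nat with (S (j + s)) in IH by lia.
    replace (S j + s)%nat with (S (j + s)) by lia.
    simpl P in *. simpl Cpow in *. rewrite Cpow_add_r in *.
    pose proof (Cpow_nz q j Hq0). pose proof (Cpow_nz q s Hq0).
    transitivity ((- / Cpow q s) * (P x s * (1 - x * Cpow q s) * Cpow x j * (Q (j + s) * (1 - q * (Cpow q j * Cpow q s))) *
       P (q / (x * (q * (Cpow q j * Cpow q s)))) j)).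
    { field. repeat split; auto. }
    rewrite IH. field. repeat split; auto.
Qed.

Lemma Kneg (y : C) j : y <> 0 -> P y j = Cpow y j * w j * qprod_neg (q / y) q j.
Proof.
  intros Hy. induction j.
  - simpl. ring.
  - rewrite P_S, IHj. simpl qprod_neg. simpl Cpow. simpl w.
    pose proof (Cpow_nz q j Hq0).
    field. repeat split; auto.
Qed.

Lemma P_front z k : P z (S k) = (1 - z) * P (z * q) k.
Proof.
  revert z; induction k; intros z.
  - simpl. ring.
  - rewrite P_S, IHk. simpl. ring.
Qed.

Lemma P_zero x k i : (i < k)%nat -> x * Cpow q i = 1 -> P x k = 0.
Proof.
  intros Hi Hx. replace k with (S i + (k - S i))%nat by lia. rewrite P_add, P_S, Hx. ring.
Qed.

Lemma cc1 r : cc q r = match r with O => 1 | S _ => 1 + Cpow q r end.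
Proof.
  destruct r as [|r]; simpl; auto.
  replace (r + (r + 0) + 1)%nat with (S (r + r)) by lia.
  pose proof (HQS r). pose proof (HQ r). simpl Cpow. rewrite Cpow_add_r. field. split; auto.
Qed.

Lemma Pqq N : Q (S N) = (1 - q) * P (q * q) N.
Proof. rewrite P_front. reflexivity. Qed.

Lemma cc2 r : (1 - q) * cc (q * q) r = 1 - q * Cpow q (2 * r).
Proof.
  destruct r as [|r].
  - simpl. ring.
  - unfold cc. rewrite Pqq. replace (2 * S r)%nat with (S (S (2 * r))) by lia.
    replace (2 * r + 1)%nat with (S (2 * r)) by lia.
    assert (1 - q <> 0) by (pose proof (HQS 0); simpl in H; rewrite Cmult_1_r in H; auto).
    pose proof (HQ (S r)). rewrite Pqq in H0. apply Cmult_neq_0_inv in H0.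
    simpl Cpow. field. tauto.
Qed.
End QP.


Lemma qpoch_pos x q k : qpoch x q (Z.of_nat k) = qprod_pos x q k.
Proof. destruct k; simpl; auto. rewrite SuccNat2Pos.id_succ. reflexivity. Qed.
Lemma qpoch_rec_pos x q k : qpoch_rec x q (Z.of_nat k) = / qprod_pos x q k.
Proof. destruct k; simpl; auto. rewrite SuccNat2Pos.id_succ. reflexivity. Qed.
Lemma Czpow_pos z k : Czpow z (Z.of_nat k) = Cpow z k.
Proof. destruct k; simpl; auto. rewrite SuccNat2Pos.id_succ. reflexivity. Qed.
Lemma qpoch_neg x q m : qpoch x q (- Z.of_nat (S m)) = / qprod_neg x q (S m).
Proof. simpl. rewrite SuccNat2Pos.id_succ. reflexivity. Qed.
Lemma qpoch_rec_neg x q m : qpoch_rec x q (- Z.of_nat (S m)) = qprod_neg x q (S m).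
Proof. simpl. rewrite SuccNat2Pos.id_succ. reflexivity. Qed.
Lemma Czpow_neg z m : Czpow z (- Z.of_nat (S m)) = / Cpow z (S m).
Proof. simpl. rewrite SuccNat2Pos.id_succ. reflexivity. Qed.

Lemma Cpow_div (x y : C) n : y <> 0 -> Cpow (x / y) n = Cpow x n / Cpow y n.
Proof. intros H. unfold Cdiv. rewrite Cpow_mult_l, Cpow_inv; auto. Qed.

Lemma Cdiv_nz (x y : C) : x <> 0 -> y <> 0 -> x / y <> 0.
Proof. intros Hx Hy E. apply Hx. replace x with ((x / y) * y) by (field; auto). rewrite E. ring. Qed.

Section Neg.
Variable q : C.
Hypothesis Hq0 : q <> 0.
Local Notation P x k := (qprod_pos x q k).

Lemma neg_pair (x : C) M : x <> 0 -> P x M <> 0 ->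
  / qprod_neg (q / x) q M * qprod_neg x q M = Cpow x M * Cpow x M / Cpow q M * P (q / x) M / P x M.
Proof.
  intros Hx HP.
  assert (E1 := Kneg q Hq0 x M Hx).
  assert (Hqx : q / x <> 0) by (apply Cdiv_nz; auto).
  assert (E2 := Kneg q Hq0 (q / x) M Hqx).
  replace (q / (q / x)) with x in E2 by (field; auto).
  assert (HwM := w_nz q Hq0 M).
  assert (HxM := Cpow_nz x M Hx). assert (HqM := Cpow_nz q M Hq0).
  assert (Hn : qprod_neg (q / x) q M <> 0).
  { intro E. rewrite E in E1. apply HP. rewrite E1. ring. }
  assert (Hn1 : qprod_neg (q / x) q M = P x M / (Cpow x M * w q M)) by (rewrite E1; field; auto).
  assert (Hn2 : qprod_neg x q M = P (q / x) M / (Cpow (q / x) M * w q M)).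
  { rewrite E2. rewrite Cpow_div by auto. field. repeat split; auto. }
  rewrite Hn1, Hn2, Cpow_div by auto. field. repeat split; auto.
Qed.

Lemma neg_pair2 (x : C) m : x <> 0 -> 1 - x <> 0 -> P (x * q) m <> 0 ->
  qprod_neg (x * q) q (S m) * / qprod_neg (q / x) q (S m) =
  - (Cpow x m * Cpow x m * x) * P (q / x) m / P (x * q) m.
Proof.
  intros Hx H1x HP.
  assert (Hix : / x <> 0).
  { replace (/ x) with (1 / x) by (field; auto). apply Cdiv_nz; auto. intro E; injection E; lra. }
  assert (E1 := Kneg q Hq0 x (S m) Hx).
  assert (E2 := Kneg q Hq0 (/ x) (S m) Hix).
  replace (q / / x) with (x * q) in E2 by (field; auto).
  rewrite P_front in E1, E2. replace (/ x * q) with (q / x) in E2 by (field; auto).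
  assert (HwM := w_nz q Hq0 (S m)).
  assert (HxM := Cpow_nz x m Hx). assert (HqM := Cpow_nz q m Hq0).
  assert (Hn1 : qprod_neg (q / x) q (S m) = (1 - x) * P (x * q) m / (Cpow x (S m) * w q (S m))).
  { rewrite E1. simpl Cpow. field. repeat split; auto. }
  assert (Hn2 : qprod_neg (x * q) q (S m) = (1 - / x) * P (q / x) m / (Cpow (/ x) (S m) * w q (S m))).
  { rewrite E2. rewrite Cpow_inv by auto. simpl Cpow. field. repeat split; auto. }
  rewrite Hn1, Hn2, Cpow_inv by auto. simpl Cpow. field. repeat split; auto.
Qed.
End Neg.

Lemma comb1 (q : C) (HQ : forall k, qprod_pos q q k <> 0) (f : nat -> C) N :
  csum f (S N) + csum (fun m => Cpow q (S m) * f (S m)) N = csum (fun r => cc q q r * f r) (S N).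
Proof.
  induction N.
  - cbn [csum]. rewrite (cc1 q HQ 0). ring.
  - change (csum f (S (S N))) with (csum f (S N) + f (S N)).
    change (csum (fun m => Cpow q (S m) * f (S m)) (S N)) with
      (csum (fun m => Cpow q (S m) * f (S m)) N + Cpow q (S N) * f (S N)).
    change (csum (fun r => cc q q r * f r) (S (S N))) with
      (csum (fun r => cc q q r * f r) (S N) + cc q q (S N) * f (S N)).
    rewrite <- IHN, (cc1 q HQ (S N)). remember (Cpow q (S N)) as X. ring.
Qed.

Section Core1.
Variables q a b c d e : C.
Variable N : nat.
Hypothesis Ha : a = Cpow q (S N).
Hypothesis Hq0 : q <> 0.
Hypothesis HQ : forall k, qprod_pos q q k <> 0.
Hypotheses (Hb : b <> 0) (Hc : c <> 0) (Hd : d <> 0) (He : e <> 0).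
Hypotheses (HPb : forall k, qprod_pos b q k <> 0) (HPc : forall k, qprod_pos c q k <> 0)
  (HPd : forall k, qprod_pos d q k <> 0) (HPe : forall k, qprod_pos e q k <> 0).
Hypothesis HPabc : forall k, qprod_pos (q * q * q / (a * b * c)) q k <> 0.
Local Notation P x k := (qprod_pos x q k).
Local Notation Q k := (qprod_pos q q k).

Definition bil1 (k : Z) := qpoch (q / a) q k * qpoch (q / b) q k * qpoch (q / c) q k
         * qpoch (q / d) q k * qpoch (q / e) q k
       * (qpoch_rec a q k * qpoch_rec b q k * qpoch_rec c q k
            * qpoch_rec d q k * qpoch_rec e q k)
       * Czpow (a * b * c * d * e / (q * q * q)) k.
Definition Sterm1 (k : nat) :=
       qprod_pos (q / a) q k * qprod_pos (q / b) q k * qprod_pos (q / c) q k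
         * qprod_pos (d * e / q) q k
       / (qprod_pos q q k * qprod_pos (q * q * q / (a * b * c)) q k
            * qprod_pos d q k * qprod_pos e q k)
       * Cpow q k.
Definition tt1 (k : nat) := P (q / a) k * P (q / b) k * P (q / c) k * P (q / d) k * P (q / e) k
   * (/ P a k * / P b k * / P c k * / P d k * / P e k) * Cpow (a * b * c * d * e / (q * q * q)) k.

Lemma Ha_nz : a <> 0.
Proof. rewrite Ha. apply Cpow_nz; auto. Qed.

Lemma HPa k : P a k <> 0.
Proof. pose proof (HQ (N + k)) as H. rewrite P_add in H. apply Cmult_neq_0_inv in H.
  rewrite Ha. simpl Cpow. destruct H. auto. Qed.

Lemma bil1_pos k : bil1 (Z.of_nat k) = tt1 k.
Proof. unfold bil1, tt1. rewrite !qpoch_pos, !qpoch_rec_pos, Czpow_pos. reflexivity. Qed.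

Lemma bil1_neg m : bil1 (- Z.of_nat (S m)) = Cpow q (S m) * tt1 (S m).
Proof.
  unfold bil1, tt1. rewrite !qpoch_neg, !qpoch_rec_neg, Czpow_neg.
  remember (S m) as M.
  pose proof Ha_nz as Han.
  transitivity ((/ qprod_neg (q / a) q M * qprod_neg a q M) * (/ qprod_neg (q / b) q M * qprod_neg b q M)
    * (/ qprod_neg (q / c) q M * qprod_neg c q M) * (/ qprod_neg (q / d) q M * qprod_neg d q M)
    * (/ qprod_neg (q / e) q M * qprod_neg e q M) * / Cpow (a * b * c * d * e / (q * q * q)) M).
  { ring. }
  rewrite !neg_pair; auto using HPa.
  rewrite Cpow_div by (repeat apply Cmult_neq_0; auto).
  rewrite !Cpow_mult_l.
  pose proof (Cpow_nz a M Han). pose proof (Cpow_nz b M Hb). pose proof (Cpow_nz c M Hc).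
  pose proof (Cpow_nz d M Hd). pose proof (Cpow_nz e M He). pose proof (Cpow_nz q M Hq0).
  pose proof (HPa M). pose proof (HPb M). pose proof (HPc M). pose proof (HPd M). pose proof (HPe M).
  field. repeat split; auto.
Qed.

Lemma qa_one : (q / a) * Cpow q N = 1.
Proof. rewrite Ha. simpl Cpow. field. split; auto. apply Cpow_nz; auto. Qed.

Lemma tt1_zero k : (S N <= k)%nat -> tt1 k = 0.
Proof. intros Hk. unfold tt1. rewrite (P_zero q (q / a) k N) by (auto using qa_one; lia). ring. Qed.

Lemma Sterm1_zero k : (S N <= k)%nat -> Sterm1 k = 0.
Proof. intros Hk. unfold Sterm1. rewrite (P_zero q (q / a) k N) by (auto using qa_one; lia). unfold Cdiv. ring. Qed.

Lemma T4 r : (r <= N)%nat ->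
  cc q q r * tt1 r = Q N * Q N * (uu q (q/b) (q/c) b c (b*c/q) r * (uu q (q/d) (q/e) d e (d*e/q) r * ua q q r)
     / (Q (N - r) * P q (N + r))).
Proof.
  intros Hr.
  pose proof (HPa r) as Har.
  assert (HN : N = (r + (N - r))%nat) by lia.
  set (s := (N - r)%nat) in *. clearbody s.
  pose proof (conv1 q Hq0 r s) as Hw.
  pose proof (HQ (r + s)%nat) as HQN. pose proof (HQ s) as HQs.
  assert (Hw' : w q r = P (q / Cpow q (S (r + s))) r * Cpow (Cpow q (r + s)) r * Q s / Q (r + s)).
  { rewrite <- Hw. field. auto. }
  unfold tt1, uu, ua. rewrite Ha in *. rewrite HN in *. rewrite Hw'.
  replace (Cpow q (S (r + s)) * b * c * d * e / (q * q * q)) with (Cpow q (r + s) * (b * c / q) * (d * e / q))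
    by (simpl Cpow; field; auto).
  rewrite !Cpow_mult_l. rewrite (P_add q q (r + s) r).
  simpl Cpow in *.
  pose proof (HPb r). pose proof (HPc r). pose proof (HPd r). pose proof (HPe r).
  pose proof (Cpow_nz q (r + s) Hq0).
  field. repeat split; auto.
Qed.

Lemma T5 j : (j <= N)%nat ->
  Q N * Q N * (coef q (q/b) (q/c) b c (b*c/q) N j * (P (d*e/q) j / (Q j * P d j * P e j))) =
  Q N * P (b*c/q) N / (P b N * P c N) * Sterm1 j.
Proof.
  intros Hj.
  assert (HN : N = (j + (N - j))%nat) by lia.
  set (s := (N - j)%nat) in *. clearbody s.
  assert (Hx : b * c / q <> 0) by (apply Cdiv_nz; auto; apply Cmult_neq_0; auto).
  pose proof (conv3 q Hq0 (b * c / q) j s Hx) as E.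
  pose proof (HPabc j) as Habc.
  rewrite Ha in Habc. rewrite HN in Habc.
  replace (q / (b * c / q * Cpow q (j + s))) with (q * q * q / (Cpow q (S (j + s)) * b * c)) in E
    by (simpl Cpow; field; repeat split; auto; apply Cpow_nz; auto).
  pose proof (HQ (j + s)%nat) as HQN. pose proof (HQ s) as HQs.
  pose proof (Cpow_nz _ j Hx) as Hxj.
  assert (E' : P (b * c / q) s =
     P (b * c / q) (j + s) * P (q / Cpow q (S (j + s))) j * Cpow q j * Q s /
      (Q (j + s) * P (q * q * q / (Cpow q (S (j + s)) * b * c)) j * Cpow (b * c / q) j)).
  { rewrite <- E. field. repeat split; auto. }
  unfold coef, Sterm1. rewrite Ha. rewrite HN.
  replace (j + s - j)%nat with s by lia.
  rewrite E'.
  pose proof (HPb (j + s)%nat). pose proof (HPc (j + s)%nat). pose proof (HPd j). pose proof (HPe j).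
  pose proof (HQ j).
  field. repeat split; auto.
Qed.

Lemma main1 :
  csum (fun k => bil1 (Z.of_nat k)) (S N) + csum (fun m => bil1 (- Z.of_nat (S m))) N =
  Q N * P (b*c/q) N / (P b N * P c N) * csum Sterm1 (S N).
Proof.
  rewrite (csum_ext (fun k => bil1 (Z.of_nat k)) tt1) by (intros; apply bil1_pos).
  rewrite (csum_ext (fun m => bil1 (- Z.of_nat (S m))) (fun m => Cpow q (S m) * tt1 (S m)))
    by (intros; apply bil1_neg).
  rewrite comb1 by auto.
  rewrite (csum_ext _ (fun r => Q N * Q N * (uu q (q/b) (q/c) b c (b*c/q) r * (uu q (q/d) (q/e) d e (d*e/q) r * ua q q r)
     / (Q (N - r) * P q (N + r))))) by (intros; apply T4; lia).
  rewrite csum_scal.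
  assert (HmB : b * c / q * (q / c) = b) by (field; auto).
  assert (HmC : b * c / q * (q / b) = c) by (field; auto).
  assert (HtB : b * c / q * (q / b) * (q / c) = q) by (field; auto).
  assert (HmD : d * e / q * (q / e) = d) by (field; auto).
  assert (HmE : d * e / q * (q / d) = e) by (field; auto).
  assert (HtD : d * e / q * (q / d) * (q / e) = q) by (field; auto).
  rewrite <- (watsonW q HQ q (q/b) (q/c) (q/d) (q/e) (b*c/q) (d*e/q) b c d e (HQS q HQ)
     HmB HmC HtB HmD HmE HtD N (HPb N) (HPc N) (HPd N) (HPe N)).
  rewrite <- csum_scal.
  rewrite <- csum_scal. apply csum_ext. intros j Hj. apply T5. lia.
Qed.
End Core1.

Section Core2.
Variables q a b c d e : C.
Variable N : nat.
Hypothesis Ha : a = Cpow q (S N).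
Hypothesis Hq0 : q <> 0.
Hypothesis HQ : forall k, qprod_pos q q k <> 0.
Hypotheses (Hb : b <> 0) (Hc : c <> 0) (Hd : d <> 0) (He : e <> 0).
Hypotheses (H1a : 1 - a <> 0) (H1b : 1 - b <> 0) (H1c : 1 - c <> 0) (H1d : 1 - d <> 0) (H1e : 1 - e <> 0).
Hypotheses (HPb : forall k, qprod_pos (b * q) q k <> 0) (HPc : forall k, qprod_pos (c * q) q k <> 0)
  (HPd : forall k, qprod_pos (d * q) q k <> 0) (HPe : forall k, qprod_pos (e * q) q k <> 0).
Hypothesis HPabc : forall k, qprod_pos (q * q / (a * b * c)) q k <> 0.
Local Notation P x k := (qprod_pos x q k).
Local Notation Q k := (qprod_pos q q k).

Definition bil2 (k : Z) := qpoch (q / a) q k * qpoch (q / b) q k * qpoch (q / c) q k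
         * qpoch (q / d) q k * qpoch (q / e) q k
       * (qpoch_rec (a * q) q k * qpoch_rec (b * q) q k * qpoch_rec (c * q) q k
            * qpoch_rec (d * q) q k * qpoch_rec (e * q) q k)
       * Czpow (a * b * c * d * e / q) k.
Definition Sterm2 (k : nat) :=
       qprod_pos (q / a) q k * qprod_pos (q / b) q k * qprod_pos (q / c) q k
         * qprod_pos (d * e) q k
       / (qprod_pos q q k * qprod_pos (q * q / (a * b * c)) q k
            * qprod_pos (d * q) q k * qprod_pos (e * q) q k)
       * Cpow q k.
Definition tt2 (k : nat) := P (q / a) k * P (q / b) k * P (q / c) k * P (q / d) k * P (q / e) k
   * (/ P (a * q) k * / P (b * q) k * / P (c * q) k * / P (d * q) k * / P (e * q) k)
   * Cpow (a * b * c * d * e / q) k.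

Lemma Ha_nz2 : a <> 0.
Proof. rewrite Ha. apply Cpow_nz; auto. Qed.

Lemma HPa2 k : P (a * q) k <> 0.
Proof. pose proof (HQ (S N + k)) as H. rewrite P_add in H. apply Cmult_neq_0_inv in H.
  rewrite Ha. replace (Cpow q (S N) * q) with (q * Cpow q (S N)) by ring. destruct H. auto. Qed.

Lemma bil2_pos k : bil2 (Z.of_nat k) = tt2 k.
Proof. unfold bil2, tt2. rewrite !qpoch_pos, !qpoch_rec_pos, Czpow_pos. reflexivity. Qed.

Lemma bil2_neg m : bil2 (- Z.of_nat (S m)) = - (q * (Cpow q m * Cpow q m)) * tt2 m.
Proof.
  unfold bil2, tt2. rewrite !qpoch_neg, !qpoch_rec_neg, Czpow_neg.
  pose proof Ha_nz2 as Han.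
  transitivity ((qprod_neg (a * q) q (S m) * / qprod_neg (q / a) q (S m)) * (qprod_neg (b * q) q (S m) * / qprod_neg (q / b) q (S m))
    * (qprod_neg (c * q) q (S m) * / qprod_neg (q / c) q (S m)) * (qprod_neg (d * q) q (S m) * / qprod_neg (q / d) q (S m))
    * (qprod_neg (e * q) q (S m) * / qprod_neg (q / e) q (S m)) * / Cpow (a * b * c * d * e / q) (S m)).
  { ring. }
  rewrite !neg_pair2; auto using HPa2.
  simpl Cpow.
  rewrite Cpow_div by auto.
  rewrite !Cpow_mult_l.
  pose proof (Cpow_nz a m Han). pose proof (Cpow_nz b m Hb). pose proof (Cpow_nz c m Hc).
  pose proof (Cpow_nz d m Hd). pose proof (Cpow_nz e m He). pose proof (Cpow_nz q m Hq0).
  pose proof (HPa2 m). pose proof (HPb m). pose proof (HPc m). pose proof (HPd m). pose proof (HPe m).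
  field. repeat split; auto.
Qed.

Lemma qa_one2 : (q / a) * Cpow q N = 1.
Proof. rewrite Ha. simpl Cpow. field. split; auto. apply Cpow_nz; auto. Qed.

Lemma tt2_zero k : (S N <= k)%nat -> tt2 k = 0.
Proof. intros Hk. unfold tt2. rewrite (P_zero q (q / a) k N) by (auto using qa_one2; lia). ring. Qed.

Lemma Sterm2_zero k : (S N <= k)%nat -> Sterm2 k = 0.
Proof. intros Hk. unfold Sterm2. rewrite (P_zero q (q / a) k N) by (auto using qa_one2; lia). unfold Cdiv. ring. Qed.

Lemma T4b r : (r <= N)%nat ->
  cc q (q * q) r * tt2 r = Q N * P (q * q) N * (uu q (q/b) (q/c) (b*q) (c*q) (b*c) r *
     (uu q (q/d) (q/e) (d*q) (e*q) (d*e) r * ua q (q * q) r) / (Q (N - r) * P (q * q) (N + r))).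
Proof.
  intros Hr.
  pose proof (HPa2 r) as Har.
  assert (HN : N = (r + (N - r))%nat) by lia.
  set (s := (N - r)%nat) in *. clearbody s.
  pose proof (conv1 q Hq0 r s) as Hw.
  pose proof (HQ (r + s)%nat) as HQN. pose proof (HQ s) as HQs.
  pose proof (HQ (S (r + s))) as HQN1. rewrite (Pqq q) in HQN1. apply Cmult_neq_0_inv in HQN1. destruct HQN1 as [H1q HPqq].
  assert (Hw' : w q r = P (q / Cpow q (S (r + s))) r * Cpow (Cpow q (r + s)) r * Q s / Q (r + s)).
  { rewrite <- Hw. field. auto. }
  unfold tt2, uu, ua. rewrite Ha in *. rewrite HN in *. rewrite Hw'.
  replace (Cpow q (S (r + s)) * b * c * d * e / q) with (Cpow q (r + s) * (b * c) * (d * e))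
    by (simpl Cpow; field; auto).
  rewrite !Cpow_mult_l. rewrite (P_add q (q * q) (r + s) r).
  replace (q * q * Cpow q (r + s)) with (Cpow q (S (r + s)) * q) by (simpl; ring).
  simpl Cpow in *.
  pose proof (HPb r). pose proof (HPc r). pose proof (HPd r). pose proof (HPe r).
  pose proof (Cpow_nz q (r + s) Hq0).
  field. repeat split; auto.
Qed.

Lemma T5b j : (j <= N)%nat ->
  Q N * P (q * q) N * (coef q (q/b) (q/c) (b*q) (c*q) (b*c) N j * (P (d*e) j / (Q j * P (d*q) j * P (e*q) j))) =
  P (q * q) N * P (b*c) N / (P (b*q) N * P (c*q) N) * Sterm2 j.
Proof.
  intros Hj.
  assert (HN : N = (j + (N - j))%nat) by lia.
  set (s := (N - j)%nat) in *. clearbody s.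
  assert (Hx : b * c <> 0) by (apply Cmult_neq_0; auto).
  pose proof (conv3 q Hq0 (b * c) j s Hx) as E.
  pose proof (HPabc j) as Habc.
  rewrite Ha in Habc. rewrite HN in Habc.
  replace (q / (b * c * Cpow q (j + s))) with (q * q / (Cpow q (S (j + s)) * b * c)) in E
    by (simpl Cpow; field; repeat split; auto; apply Cpow_nz; auto).
  pose proof (HQ (j + s)%nat) as HQN. pose proof (HQ s) as HQs.
  pose proof (Cpow_nz _ j Hx) as Hxj.
  assert (E' : P (b * c) s =
     P (b * c) (j + s) * P (q / Cpow q (S (j + s))) j * Cpow q j * Q s /
      (Q (j + s) * P (q * q / (Cpow q (S (j + s)) * b * c)) j * Cpow (b * c) j)).
  { rewrite <- E. field. repeat split; auto. }
  pose proof (HQ (S (j + s))) as HQN1. rewrite (Pqq q) in HQN1. apply Cmult_neq_0_inv in HQN1. destruct HQN1 as [H1q HPqq].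
  unfold coef, Sterm2. rewrite Ha. rewrite HN.
  replace (j + s - j)%nat with s by lia.
  rewrite E'.
  pose proof (HPb (j + s)%nat). pose proof (HPc (j + s)%nat). pose proof (HPd j). pose proof (HPe j).
  pose proof (HQ j).
  field. repeat split; auto.
Qed.

Lemma main2 :
  csum (fun k => bil2 (Z.of_nat k)) (S N) + csum (fun m => bil2 (- Z.of_nat (S m))) (S N) =
  (1 - q) * P (q * q) N * P (b*c) N / (P (b*q) N * P (c*q) N) * csum Sterm2 (S N).
Proof.
  rewrite (csum_ext (fun k => bil2 (Z.of_nat k)) tt2) by (intros; apply bil2_pos).
  rewrite (csum_ext (fun m => bil2 (- Z.of_nat (S m))) (fun m => - (q * (Cpow q m * Cpow q m)) * tt2 m))
    by (intros; apply bil2_neg).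
  rewrite <- csum_plus.
  rewrite (csum_ext _ (fun r => (1 - q) * (Q N * P (q * q) N * (uu q (q/b) (q/c) (b*q) (c*q) (b*c) r *
     (uu q (q/d) (q/e) (d*q) (e*q) (d*e) r * ua q (q * q) r) / (Q (N - r) * P (q * q) (N + r)))))).
  2:{ intros r Hr. rewrite <- T4b by lia. rewrite (Cmult_assoc (1 - q)), (cc2 q HQ r).
      replace (2 * r)%nat with (r + r)%nat by lia. rewrite Cpow_add_r. ring. }
  rewrite csum_scal.
  assert (HmB : b * c * (q / c) = b * q) by (field; auto).
  assert (HmC : b * c * (q / b) = c * q) by (field; auto).
  assert (HtB : b * c * (q / b) * (q / c) = q * q) by (field; auto).
  assert (HmD : d * e * (q / e) = d * q) by (field; auto).
  assert (HmE : d * e * (q / d) = e * q) by (field; auto).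
  assert (HtD : d * e * (q / d) * (q / e) = q * q) by (field; auto).
  assert (Ht : forall k, 1 - q * q * Cpow q k <> 0).
  { intros k. pose proof (HQS q HQ (S k)). simpl Cpow in H. rewrite Cmult_assoc in H. auto. }
  rewrite csum_scal.
  rewrite <- (watsonW q HQ (q * q) (q/b) (q/c) (q/d) (q/e) (b*c) (d*e) (b*q) (c*q) (d*q) (e*q) Ht
     HmB HmC HtB HmD HmE HtD N (HPb N) (HPc N) (HPd N) (HPe N)).
  rewrite <- csum_scal.
  transitivity ((1 - q) * csum (fun j => P (q * q) N * P (b*c) N / (P (b*q) N * P (c*q) N) * Sterm2 j) (S N)).
  - f_equal. apply csum_ext. intros j Hj. apply T5b. lia.
  - rewrite csum_scal. unfold Cdiv. rewrite !Cmult_assoc. reflexivity.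
Qed.
End Core2.


Lemma exp_mono (x y : R) : (x <= y)%R -> (exp x <= exp y)%R.
Proof. intros H. destruct (Rle_lt_or_eq_dec x y H) as [H'|H'].
  left; apply exp_increasing; auto. subst; lra. Qed.

Lemma pow_le1' (r : R) n : (0 <= r <= 1)%R -> (r ^ n <= 1)%R.
Proof. intros H. induction n; simpl. lra. assert (0 <= r ^ n)%R by (apply pow_le; lra). nra. Qed.

Fixpoint Rp (t r : R) (k : nat) : R := match k with O => 1%R | S k => (Rp t r k * (1 + t * r ^ k))%R end.

Lemma Rp_ge1 t r k : (0 <= t)%R -> (0 <= r)%R -> (1 <= Rp t r k)%R.
Proof. intros Ht Hr. induction k; simpl. lra.
  assert (0 <= t * r ^ k)%R by (apply Rmult_le_pos; auto; apply pow_le; auto). nra. Qed.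

Lemma Rp_exp t r k : (0 <= t)%R -> (0 <= r < 1)%R -> (Rp t r k <= exp (t * (1 - r ^ k) / (1 - r)))%R.
Proof.
  intros Ht Hr. induction k; simpl.
  - replace (t * (1 - 1) / (1 - r))%R with 0%R by (field; lra). rewrite exp_0. lra.
  - assert (E : (t * (1 - r * r ^ k) / (1 - r) = t * (1 - r ^ k) / (1 - r) + t * r ^ k)%R) by (field; lra).
    rewrite E, exp_plus.
    apply Rmult_le_compat; auto.
    + pose proof (Rp_ge1 t r k Ht (proj1 Hr)). lra.
    + assert (0 <= t * r ^ k)%R by (apply Rmult_le_pos; auto; apply pow_le; lra). lra.
    + apply exp_ineq1_le.
Qed.

Lemma Rp_exp' t r k : (0 <= t)%R -> (0 <= r < 1)%R -> (Rp t r k <= exp (t / (1 - r)))%R.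
Proof.
  intros Ht Hr. eapply Rle_trans. apply Rp_exp; auto. apply exp_mono.
  unfold Rdiv. apply Rmult_le_compat_r. left; apply Rinv_0_lt_compat; lra.
  assert (0 <= r ^ k)%R by (apply pow_le; lra). nra.
Qed.

Lemma expm1 s : (0 <= s)%R -> (exp s - 1 <= s * exp s)%R.
Proof.
  intros Hs. pose proof (exp_ineq1_le (- s)).
  assert (exp (- s) * exp s = 1)%R by (rewrite <- exp_plus; replace (- s + s)%R with 0%R by ring; apply exp_0).
  pose proof (exp_pos s). nra.
Qed.

Section Inf.
Variable q : C.
Hypothesis Hq : (Cmod q < 1)%R.
Local Notation P x k := (qprod_pos x q k).

Lemma B1 y k : (Cmod (P y k - 1) <= Rp (Cmod y) (Cmod q) k - 1)%R.
Proof.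
  induction k; simpl.
  - replace (1 - 1) with (RtoC 0) by ring. rewrite Cmod_0. lra.
  - replace (P y k * (1 - y * Cpow q k) - 1) with ((P y k - 1) * (1 - y * Cpow q k) + - (y * Cpow q k)) by ring.
    eapply Rle_trans. apply Cmod_triangle. rewrite Cmod_opp, Cmod_mult, Cmod_mult, Cmod_pow.
    assert (H1 : (Cmod (1 - y * Cpow q k) <= 1 + Cmod y * Cmod q ^ k)%R).
    { unfold Cminus. eapply Rle_trans. apply Cmod_triangle. rewrite Cmod_opp, Cmod_mult, Cmod_pow, Cmod_1. lra. }
    pose proof (Cmod_ge_0 (P y k - 1)). pose proof (Cmod_ge_0 (1 - y * Cpow q k)).
    assert (0 <= Cmod y * Cmod q ^ k)%R by (apply Rmult_le_pos; [apply Cmod_ge_0 | apply pow_le, Cmod_ge_0]).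
    pose proof (Rp_ge1 (Cmod y) (Cmod q) k (Cmod_ge_0 _) (Cmod_ge_0 _)).
    assert (Cmod (P y k - 1) * Cmod (1 - y * Cpow q k) <= (Rp (Cmod y) (Cmod q) k - 1) * (1 + Cmod y * Cmod q ^ k))%R.
    { apply Rmult_le_compat; auto. }
    nra.
Qed.

Lemma B2 y k : (Cmod (P y k) <= exp (Cmod y / (1 - Cmod q)))%R.
Proof.
  replace (P y k) with ((P y k - 1) + 1) by ring.
  eapply Rle_trans. apply Cmod_triangle. rewrite Cmod_1.
  pose proof (B1 y k). pose proof (Rp_exp' (Cmod y) (Cmod q) k (Cmod_ge_0 _)).
  pose proof (Cmod_ge_0 q). lra.
Qed.

Lemma P_cauchy x : cauchy (T := C_CompleteNormedModule) (filtermap (fun n => P x n) eventually).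
Proof.
  intros eps.
  set (r := Cmod q) in *. set (t := Cmod x) in *.
  assert (Hr0 : (0 <= r)%R) by apply Cmod_ge_0.
  assert (Ht0 : (0 <= t)%R) by apply Cmod_ge_0.
  set (M := exp (t / (1 - r))).
  assert (HM : (0 < M)%R) by apply exp_pos.
  assert (Hy : (0 < eps * (1 - r) / (M * M * (t + 1)))%R).
  { apply Rdiv_lt_0_compat. apply Rmult_lt_0_compat. apply cond_pos. lra.
    apply Rmult_lt_0_compat. nra. lra. }
  destruct (pow_lt_1_zero r (ltac:(rewrite Rabs_pos_eq; auto)) _ Hy) as [N0 HN0].
  exists (P x N0). exists N0. intros n Hn.
  apply (@norm_compat1 C_AbsRing C_CompleteNormedModule).
  change (Cmod (P x n - P x N0) < eps)%R.
  replace n with (N0 + (n - N0))%nat by lia. rewrite P_add.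
  set (k := (n - N0)%nat).
  replace (P x N0 * P (x * Cpow q N0) k - P x N0) with (P x N0 * (P (x * Cpow q N0) k - 1)) by ring.
  rewrite Cmod_mult.
  pose proof (B2 x N0) as HB2. fold r t M in HB2.
  pose proof (B1 (x * Cpow q N0) k) as HB1.
  rewrite Cmod_mult, Cmod_pow in HB1. fold r t in HB1.
  set (s := (t * r ^ N0)%R) in *.
  assert (Hs0 : (0 <= s)%R) by (apply Rmult_le_pos; auto; apply pow_le; auto).
  pose proof (Rp_exp' s r k Hs0 (conj Hr0 Hq)) as HR.
  pose proof (expm1 (s / (1 - r)) (ltac:(apply Rmult_le_pos; auto; left; apply Rinv_0_lt_compat; lra))) as HE.
  assert (Hss : (s <= t)%R).
  { unfold s. assert (r ^ N0 <= 1)%R by (apply pow_le1'; lra). nra. }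
  assert (HEM : (exp (s / (1 - r)) <= M)%R).
  { apply exp_mono. unfold Rdiv. apply Rmult_le_compat_r. left; apply Rinv_0_lt_compat; lra. auto. }
  pose proof (HN0 N0 (le_n _)) as HrN. rewrite Rabs_pos_eq in HrN by (apply pow_le; auto).
  pose proof (Cmod_ge_0 (P (x * Cpow q N0) k - 1)).
  pose proof (Cmod_ge_0 (P x N0)).
  assert (H1 : (Cmod (P (x * Cpow q N0) k - 1) <= s / (1 - r) * M)%R).
  { eapply Rle_trans. apply HB1. eapply Rle_trans. 2: { apply Rmult_le_compat_l. 
      apply Rmult_le_pos; auto; left; apply Rinv_0_lt_compat; lra. apply HEM. } lra. }
  assert (H2 : (Cmod (P x N0) * Cmod (P (x * Cpow q N0) k - 1) <= M * (s / (1 - r) * M))%R).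
  { apply Rmult_le_compat; auto. }
  eapply Rle_lt_trans. apply H2.
  assert (H3 : (s < eps * (1 - r) / (M * M * (t + 1)) * t + eps * (1 - r) / (M * M * (t + 1)))%R).
  { unfold s. assert (0 <= t)%R by auto. nra. }
  assert (H4 : (M * (s / (1 - r) * M) = s * (M * M) / (1 - r))%R) by (field; lra).
  rewrite H4.
  apply (Rmult_lt_reg_r (1 - r)). lra.
  replace (s * (M * M) / (1 - r) * (1 - r))%R with (s * (M * M))%R by (field; lra).
  replace (eps * (1 - r) / (M * M * (t + 1)) * t + eps * (1 - r) / (M * M * (t + 1)))%R
    with (eps * (1 - r) / (M * M))%R in H3 by (field; split; lra).
  apply (Rmult_lt_compat_r (M * M)) in H3. 2: nra.
  replace (eps * (1 - r) / (M * M) * (M * M))%R with (eps * (1 - r))%R in H3 by (field; lra).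
  lra.
Qed.

Lemma qinf_lim x : filterlim (fun n => P x n) eventually (locally (T := C_CompleteNormedModule) (qpoch_inf x q)).
Proof.
  apply filterlim_locally. intros eps.
  pose proof (complete_cauchy (T := C_CompleteNormedModule) (filtermap (fun n => P x n) eventually)
    (filtermap_proper_filter _ _ _ _ eventually_filter) (P_cauchy x) eps) as H.
  exact H.
Qed.

Lemma qinf_shift x m : qpoch_inf x q = P x m * qpoch_inf (x * Cpow q m) q.
Proof.
  apply (filterlim_locally_unique (K := C_AbsRing) (V := C_CompleteNormedModule) (F := eventually)
     (fun k => P x (m + k))).
  - apply filterlim_locally. intros eps.
    pose proof (proj1 (filterlim_locally _ _) (qinf_lim x) eps) as [N HN].
    exists N. intros n Hn. apply HN. lia.
  - apply (filterlim_ext (fun k => P x m * P (x * Cpow q m) k)).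
    { intros k. rewrite P_add. reflexivity. }
    eapply filterlim_comp. apply qinf_lim.
    apply (filterlim_scal_r (K := C_AbsRing) (V := C_CompleteNormedModule) (P x m)).
Qed.
End Inf.


Lemma sum_n_csum (f : nat -> C) n : sum_n f n = csum f (S n).
Proof.
  induction n.
  - rewrite sum_O. simpl. ring.
  - rewrite sum_Sn, IHn. reflexivity.
Qed.

Lemma csum_stable (f : nat -> C) M n : (forall k, (M <= k)%nat -> f k = 0) -> (M <= n)%nat -> csum f n = csum f M.
Proof.
  intros H Hn. induction n.
  - replace M with 0%nat by lia. reflexivity.
  - destruct (Nat.eq_dec M (S n)) as [E|E]. subst; reflexivity.
    rewrite csum_S, IHn by lia. rewrite H by lia. ring.
Qed.

Lemma is_series_fin (f : nat -> C) M : (forall k, (M <= k)%nat -> f k = 0) -> is_series f (csum f M).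
Proof.
  intros H. unfold is_series.
  apply (filterlim_ext_loc (fun _ => csum f M)).
  - exists M. intros n Hn. rewrite sum_n_csum. symmetry. apply csum_stable; auto.
  - apply filterlim_const.
Qed.

Lemma bil_ext (f g : Z -> C) L : (forall k, f k = g k) -> is_bilateral_series f L -> is_bilateral_series g L.
Proof.
  intros H [L1 [L2 [H1 [H2 H3]]]]. exists L1, L2. split; [|split]; auto.
  - eapply is_series_ext; [|exact H1]. intros; apply H.
  - eapply is_series_ext; [|exact H2]. intros; apply H.
Qed.

Lemma rec_def_pos x q k : qpoch_rec_def x q (Z.of_nat k) -> qprod_pos x q k <> 0.
Proof. destruct k; simpl; auto. rewrite SuccNat2Pos.id_succ. auto. Qed.

Lemma def_one x q : qpoch_def (q / x) q (-1)%Z -> q <> 0 -> 1 - x <> 0.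
Proof. intros H Hq E. apply H. assert (Ex : x = 1).
  { replace x with (1 - (1 - x)) by ring. rewrite E. ring. }
  subst x. simpl. field. auto. Qed.

Lemma q_facts q : (0 < Cmod q < 1)%R -> q <> 0 /\ (forall k, qprod_pos q q k <> 0).
Proof.
  intros [H0 H1]. split.
  - apply Cmod_gt_0. auto.
  - intros k. apply P_nz. intros j E.
    assert (Cmod (q * Cpow q j) < 1)%R.
    { rewrite Cmod_mult, Cmod_pow. assert (Cmod q ^ j <= 1)%R by (apply pow_le1'; lra).
      assert (0 <= Cmod q ^ j)%R by (apply pow_le; lra). nra. }
    assert (E1 : q * Cpow q j = 1) by (replace (q * Cpow q j) with (1 - (1 - q * Cpow q j)) by ring; rewrite E; ring).
    rewrite E1 in H.
    rewrite Cmod_1 in H. lra.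
Qed.

Definition PF1 q a b c := qpoch_inf q q * qpoch_inf (a * b / q) q * qpoch_inf (b * c / q) q
          * qpoch_inf (a * c / q) q
        / (qpoch_inf a q * qpoch_inf b q * qpoch_inf c q
             * qpoch_inf (a * b * c / (q * q)) q).
Definition PF2 q a b c := qpoch_inf q q * qpoch_inf (a * b) q * qpoch_inf (b * c) q
          * qpoch_inf (a * c) q
        / (qpoch_inf (a * q) q * qpoch_inf (b * q) q * qpoch_inf (c * q) q
             * qpoch_inf (a * b * c / q) q).

Section Id.
Variables q a b c d e : C.
Variable N : nat.
Hypothesis Ha : a = Cpow q (S N).
Hypothesis Hq : (0 < Cmod q < 1)%R.
Hypotheses (Hb : b <> 0) (Hc : c <> 0) (Hd : d <> 0) (He : e <> 0).

Lemma PF1_val : qpoch_inf a q * qpoch_inf b q * qpoch_inf c q * qpoch_inf (a * b * c / (q * q)) q <> 0 ->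
  PF1 q a b c = qprod_pos q q N * qprod_pos (b * c / q) q N / (qprod_pos b q N * qprod_pos c q N).
Proof.
  intros Hinf. destruct (q_facts q Hq) as [Hq0 HQ].
  assert (Hq1 : (Cmod q < 1)%R) by lra.
  unfold PF1.
  rewrite (qinf_shift q Hq1 q N), (qinf_shift q Hq1 b N), (qinf_shift q Hq1 c N), (qinf_shift q Hq1 (b * c / q) N) in *.
  replace (q * Cpow q N) with a in * by (rewrite Ha; reflexivity).
  replace (a * b / q) with (b * Cpow q N) by (rewrite Ha; simpl; field; auto).
  replace (a * c / q) with (c * Cpow q N) by (rewrite Ha; simpl; field; auto).
  replace (a * b * c / (q * q)) with (b * c / q * Cpow q N) in * by (rewrite Ha; simpl; field; auto).
  repeat match goal with H : _ * _ <> 0 |- _ => apply Cmult_neq_0_inv in H; destruct H end.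
  repeat (match goal with H : ?x * ?y <> ?z |- _ => apply Cmult_neq_0_inv in H; destruct H end).
  field. repeat split; auto.
Qed.

Lemma PF2_val : qpoch_inf (a * q) q * qpoch_inf (b * q) q * qpoch_inf (c * q) q * qpoch_inf (a * b * c / q) q <> 0 ->
  PF2 q a b c = (1 - q) * qprod_pos (q * q) q N * qprod_pos (b * c) q N / (qprod_pos (b * q) q N * qprod_pos (c * q) q N).
Proof.
  intros Hinf. destruct (q_facts q Hq) as [Hq0 HQ].
  assert (Hq1 : (Cmod q < 1)%R) by lra.
  unfold PF2. rewrite <- Pqq.
  rewrite (qinf_shift q Hq1 q (S N)), (qinf_shift q Hq1 (b * q) N), (qinf_shift q Hq1 (c * q) N), (qinf_shift q Hq1 (b * c) N) in *.
  replace (q * Cpow q (S N)) with (a * q) in * by (rewrite Ha; ring).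
  replace (a * b * c / q) with (b * c * Cpow q N) in * by (rewrite Ha; simpl; field; auto).
  replace (a * b) with (b * q * Cpow q N) by (rewrite Ha; simpl; ring).
  replace (a * c) with (c * q * Cpow q N) by (rewrite Ha; simpl; ring).
  repeat (match goal with H : ?x * ?y <> ?z |- _ => apply Cmult_neq_0_inv in H; destruct H end).
  field. repeat split; auto.
Qed.

Hypotheses (HPb : forall k, qprod_pos b q k <> 0) (HPc : forall k, qprod_pos c q k <> 0)
  (HPd : forall k, qprod_pos d q k <> 0) (HPe : forall k, qprod_pos e q k <> 0).

Lemma id1_core : (forall k, qprod_pos (q * q * q / (a * b * c)) q k <> 0) ->
  qpoch_inf a q * qpoch_inf b q * qpoch_inf c q * qpoch_inf (a * b * c / (q * q)) q <> 0 ->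
  exists S, is_series (Sterm1 q a b c d e) S /\ is_bilateral_series (bil1 q a b c d e) (PF1 q a b c * S).
Proof.
  intros HPabc Hinf. destruct (q_facts q Hq) as [Hq0 HQ].
  exists (csum (Sterm1 q a b c d e) (S N)). split.
  - apply is_series_fin. intros. eapply Sterm1_zero; eauto.
  - exists (csum (fun k => bil1 q a b c d e (Z.of_nat k)) (S N)), (csum (fun m => bil1 q a b c d e (- Z.of_nat (S m))) N).
    split; [|split].
    + apply is_series_fin. intros k Hk. rewrite bil1_pos. eapply tt1_zero; eauto.
    + apply is_series_fin. intros k Hk. rewrite (bil1_neg q a b c d e N); auto. rewrite (tt1_zero q a b c d e N); auto. ring. lia.
    + rewrite (main1 q a b c d e N); auto. rewrite PF1_val; auto.
Qed.
End Id.

Section Id2.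
Variables q a b c d e : C.
Variable N : nat.
Hypothesis Ha : a = Cpow q (S N).
Hypothesis Hq : (0 < Cmod q < 1)%R.
Hypotheses (Hb : b <> 0) (Hc : c <> 0) (Hd : d <> 0) (He : e <> 0).
Hypotheses (H1a : 1 - a <> 0) (H1b : 1 - b <> 0) (H1c : 1 - c <> 0) (H1d : 1 - d <> 0) (H1e : 1 - e <> 0).
Hypotheses (HPb : forall k, qprod_pos (b * q) q k <> 0) (HPc : forall k, qprod_pos (c * q) q k <> 0)
  (HPd : forall k, qprod_pos (d * q) q k <> 0) (HPe : forall k, qprod_pos (e * q) q k <> 0).

Lemma id2_core : (forall k, qprod_pos (q * q / (a * b * c)) q k <> 0) ->
  qpoch_inf (a * q) q * qpoch_inf (b * q) q * qpoch_inf (c * q) q * qpoch_inf (a * b * c / q) q <> 0 ->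
  exists S, is_series (Sterm2 q a b c d e) S /\ is_bilateral_series (bil2 q a b c d e) (PF2 q a b c * S).
Proof.
  intros HPabc Hinf. destruct (q_facts q Hq) as [Hq0 HQ].
  exists (csum (Sterm2 q a b c d e) (S N)). split.
  - apply is_series_fin. intros. eapply Sterm2_zero; eauto.
  - exists (csum (fun k => bil2 q a b c d e (Z.of_nat k)) (S N)), (csum (fun m => bil2 q a b c d e (- Z.of_nat (S m))) (S N)).
    split; [|split].
    + apply is_series_fin. intros k Hk. rewrite bil2_pos. eapply tt2_zero; eauto.
    + apply is_series_fin. intros k Hk. rewrite (bil2_neg q a b c d e N); auto. rewrite (tt2_zero q a b c d e N); auto. ring.
    + rewrite (main2 q a b c d e N); auto. rewrite (PF2_val q a b c N); auto.
Qed.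
End Id2.


Section Perm.
Variables q a b c d e : C.

Lemma bil1_p12 k : bil1 q b a c d e k = bil1 q a b c d e k.
Proof. unfold bil1. replace (b * a * c * d * e / (q * q * q)) with (a * b * c * d * e / (q * q * q)) by (unfold Cdiv; ring). unfold Cdiv; ring. Qed.
Lemma bil1_p13 k : bil1 q c b a d e k = bil1 q a b c d e k.
Proof. unfold bil1. replace (c * b * a * d * e / (q * q * q)) with (a * b * c * d * e / (q * q * q)) by (unfold Cdiv; ring). unfold Cdiv; ring. Qed.
Lemma bil2_p12 k : bil2 q b a c d e k = bil2 q a b c d e k.
Proof. unfold bil2. replace (b * a * c * d * e / q) with (a * b * c * d * e / q) by (unfold Cdiv; ring). unfold Cdiv; ring. Qed.
Lemma bil2_p13 k : bil2 q c b a d e k = bil2 q a b c d e k.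
Proof. unfold bil2. replace (c * b * a * d * e / q) with (a * b * c * d * e / q) by (unfold Cdiv; ring). unfold Cdiv; ring. Qed.
Lemma St1_p12 k : Sterm1 q b a c d e k = Sterm1 q a b c d e k.
Proof. unfold Sterm1. replace (b * a * c) with (a * b * c) by (unfold Cdiv; ring). unfold Cdiv; ring. Qed.
Lemma St1_p13 k : Sterm1 q c b a d e k = Sterm1 q a b c d e k.
Proof. unfold Sterm1. replace (c * b * a) with (a * b * c) by (unfold Cdiv; ring). unfold Cdiv; ring. Qed.
Lemma St2_p12 k : Sterm2 q b a c d e k = Sterm2 q a b c d e k.
Proof. unfold Sterm2. replace (b * a * c) with (a * b * c) by (unfold Cdiv; ring). unfold Cdiv; ring. Qed.
Lemma St2_p13 k : Sterm2 q c b a d e k = Sterm2 q a b c d e k.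
Proof. unfold Sterm2. replace (c * b * a) with (a * b * c) by (unfold Cdiv; ring). unfold Cdiv; ring. Qed.
Lemma PF1_p12 : PF1 q b a c = PF1 q a b c.
Proof. unfold PF1. replace (b * a * c) with (a * b * c) by ring. replace (b * a) with (a * b) by ring.
  unfold Cdiv. f_equal; [ring | f_equal; ring]. Qed.
Lemma PF1_p13 : PF1 q c b a = PF1 q a b c.
Proof. unfold PF1. replace (c * b * a) with (a * b * c) by ring. replace (c * b) with (b * c) by ring.
  replace (b * a) with (a * b) by ring. replace (c * a) with (a * c) by ring.
  unfold Cdiv. f_equal; [ring | f_equal; ring]. Qed.
Lemma PF2_p12 : PF2 q b a c = PF2 q a b c.
Proof. unfold PF2. replace (b * a * c) with (a * b * c) by ring. replace (b * a) with (a * b) by ring.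
  unfold Cdiv. f_equal; [ring | f_equal; ring]. Qed.
Lemma PF2_p13 : PF2 q c b a = PF2 q a b c.
Proof. unfold PF2. replace (c * b * a) with (a * b * c) by ring. replace (c * b) with (b * c) by ring.
  replace (b * a) with (a * b) by ring. replace (c * a) with (a * c) by ring.
  unfold Cdiv. f_equal; [ring | f_equal; ring]. Qed.
End Perm.

Lemma getP (x q : C) (H : forall k : Z, qpoch_rec_def x q k) : forall k, qprod_pos x q k <> 0.
Proof. intros k. apply rec_def_pos. apply H. Qed.

Theorem theorem1p1 (q a b c d e : C) :
  (0 < Cmod q < 1)%R ->
  (exists n : nat, (1 <= n)%nat /\ (a = Cpow q n \/ b = Cpow q n \/ c = Cpow q n)) ->
  a <> 0 -> b <> 0 -> c <> 0 -> d <> 0 -> e <> 0 ->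
  ((* first identity: all terms well defined *)
  (forall k : Z,
     qpoch_def (q / a) q k /\ qpoch_def (q / b) q k /\ qpoch_def (q / c) q k /\
     qpoch_def (q / d) q k /\ qpoch_def (q / e) q k /\
     qpoch_rec_def a q k /\ qpoch_rec_def b q k /\ qpoch_rec_def c q k /\
     qpoch_rec_def d q k /\ qpoch_rec_def e q k) ->
  qpoch_inf a q * qpoch_inf b q * qpoch_inf c q * qpoch_inf (a * b * c / (q * q)) q <> 0 ->
  (forall k : nat,
     qprod_pos q q k * qprod_pos (q * q * q / (a * b * c)) q k
       * qprod_pos d q k * qprod_pos e q k <> 0) ->
  (exists S : C,
     is_series (fun k : nat =>
       qprod_pos (q / a) q k * qprod_pos (q / b) q k * qprod_pos (q / c) q k
         * qprod_pos (d * e / q) q k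
       / (qprod_pos q q k * qprod_pos (q * q * q / (a * b * c)) q k
            * qprod_pos d q k * qprod_pos e q k)
       * Cpow q k) S /\
     is_bilateral_series (fun k : Z =>
       qpoch (q / a) q k * qpoch (q / b) q k * qpoch (q / c) q k
         * qpoch (q / d) q k * qpoch (q / e) q k
       * (qpoch_rec a q k * qpoch_rec b q k * qpoch_rec c q k
            * qpoch_rec d q k * qpoch_rec e q k)
       * Czpow (a * b * c * d * e / (q * q * q)) k)
       (qpoch_inf q q * qpoch_inf (a * b / q) q * qpoch_inf (b * c / q) q
          * qpoch_inf (a * c / q) q
        / (qpoch_inf a q * qpoch_inf b q * qpoch_inf c q
             * qpoch_inf (a * b * c / (q * q)) q)
        * S))) /\
  ((* second identity: all terms well defined *)
  (forall k : Z,
     qpoch_def (q / a) q k /\ qpoch_def (q / b) q k /\ qpoch_def (q / c) q k /\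
     qpoch_def (q / d) q k /\ qpoch_def (q / e) q k /\
     qpoch_rec_def (a * q) q k /\ qpoch_rec_def (b * q) q k /\ qpoch_rec_def (c * q) q k /\
     qpoch_rec_def (d * q) q k /\ qpoch_rec_def (e * q) q k) ->
  qpoch_inf (a * q) q * qpoch_inf (b * q) q * qpoch_inf (c * q) q
    * qpoch_inf (a * b * c / q) q <> 0 ->
  (forall k : nat,
     qprod_pos q q k * qprod_pos (q * q / (a * b * c)) q k
       * qprod_pos (d * q) q k * qprod_pos (e * q) q k <> 0) ->
  (exists S : C,
     is_series (fun k : nat =>
       qprod_pos (q / a) q k * qprod_pos (q / b) q k * qprod_pos (q / c) q k
         * qprod_pos (d * e) q k
       / (qprod_pos q q k * qprod_pos (q * q / (a * b * c)) q k
            * qprod_pos (d * q) q k * qprod_pos (e * q) q k)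
       * Cpow q k) S /\
     is_bilateral_series (fun k : Z =>
       qpoch (q / a) q k * qpoch (q / b) q k * qpoch (q / c) q k
         * qpoch (q / d) q k * qpoch (q / e) q k
       * (qpoch_rec (a * q) q k * qpoch_rec (b * q) q k * qpoch_rec (c * q) q k
            * qpoch_rec (d * q) q k * qpoch_rec (e * q) q k)
       * Czpow (a * b * c * d * e / q) k)
       (qpoch_inf q q * qpoch_inf (a * b) q * qpoch_inf (b * c) q
          * qpoch_inf (a * c) q
        / (qpoch_inf (a * q) q * qpoch_inf (b * q) q * qpoch_inf (c * q) q
             * qpoch_inf (a * b * c / q) q)
        * S))).
Proof.
  intros Hq Hex Ha0 Hb0 Hc0 Hd0 He0.
  destruct (q_facts q Hq) as [Hq0 HQ].
  destruct Hex as [n [Hn Habc]]. destruct n as [|N]; [lia|].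
  split.
  - intros Hdef Hinf HS.
    assert (HPa : forall k, qprod_pos a q k <> 0) by (apply getP; intros k; apply Hdef).
    assert (HPb : forall k, qprod_pos b q k <> 0) by (apply getP; intros k; apply Hdef).
    assert (HPc : forall k, qprod_pos c q k <> 0) by (apply getP; intros k; apply Hdef).
    assert (HPd : forall k, qprod_pos d q k <> 0) by (apply getP; intros k; apply Hdef).
    assert (HPe : forall k, qprod_pos e q k <> 0) by (apply getP; intros k; apply Hdef).
    assert (HPabc : forall k, qprod_pos (q * q * q / (a * b * c)) q k <> 0).
    { intros k. pose proof (HS k) as H.
      repeat (apply Cmult_neq_0_inv in H; destruct H as [H ?]). auto. }
    destruct Habc as [Ea|[Eb|Ec]].
    + destruct (id1_core q a b c d e N Ea Hq Hb0 Hc0 Hd0 He0 HPb HPc HPd HPe HPabc Hinf) as [S [H1 H2]].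
      exists S. split; [exact H1 | exact H2].
    + assert (HPabc' : forall k, qprod_pos (q * q * q / (b * a * c)) q k <> 0).
      { intros k. replace (b * a * c) with (a * b * c) by ring. auto. }
      assert (Hinf' : qpoch_inf b q * qpoch_inf a q * qpoch_inf c q * qpoch_inf (b * a * c / (q * q)) q <> 0).
      { replace (b * a * c) with (a * b * c) by ring.
        replace (qpoch_inf b q * qpoch_inf a q) with (qpoch_inf a q * qpoch_inf b q) by ring. auto. }
      destruct (id1_core q b a c d e N Eb Hq Ha0 Hc0 Hd0 He0 HPa HPc HPd HPe HPabc' Hinf') as [S [H1 H2]].
      exists S. split.
      * eapply is_series_ext; [|exact H1]. intros k. exact (St1_p12 q a b c d e k).
      * rewrite PF1_p12 in H2. eapply bil_ext; [|exact H2]. intros k. exact (bil1_p12 q a b c d e k).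
    + assert (HPabc' : forall k, qprod_pos (q * q * q / (c * b * a)) q k <> 0).
      { intros k. replace (c * b * a) with (a * b * c) by ring. auto. }
      assert (Hinf' : qpoch_inf c q * qpoch_inf b q * qpoch_inf a q * qpoch_inf (c * b * a / (q * q)) q <> 0).
      { replace (c * b * a) with (a * b * c) by ring.
        replace (qpoch_inf c q * qpoch_inf b q * qpoch_inf a q) with (qpoch_inf a q * qpoch_inf b q * qpoch_inf c q) by ring. auto. }
      destruct (id1_core q c b a d e N Ec Hq Hb0 Ha0 Hd0 He0 HPb HPa HPd HPe HPabc' Hinf') as [S [H1 H2]].
      exists S. split.
      * eapply is_series_ext; [|exact H1]. intros k. exact (St1_p13 q a b c d e k).
      * rewrite PF1_p13 in H2. eapply bil_ext; [|exact H2]. intros k. exact (bil1_p13 q a b c d e k).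
  - intros Hdef Hinf HS.
    assert (HPa : forall k, qprod_pos (a * q) q k <> 0) by (apply getP; intros k; apply Hdef).
    assert (HPb : forall k, qprod_pos (b * q) q k <> 0) by (apply getP; intros k; apply Hdef).
    assert (HPc : forall k, qprod_pos (c * q) q k <> 0) by (apply getP; intros k; apply Hdef).
    assert (HPd : forall k, qprod_pos (d * q) q k <> 0) by (apply getP; intros k; apply Hdef).
    assert (HPe : forall k, qprod_pos (e * q) q k <> 0) by (apply getP; intros k; apply Hdef).
    assert (H1a : 1 - a <> 0) by (apply (def_one a q); auto; apply Hdef).
    assert (H1b : 1 - b <> 0) by (apply (def_one b q); auto; apply Hdef).
    assert (H1c : 1 - c <> 0) by (apply (def_one c q); auto; apply Hdef).
    assert (H1d : 1 - d <> 0) by (apply (def_one d q); auto; apply Hdef).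
    assert (H1e : 1 - e <> 0) by (apply (def_one e q); auto; apply Hdef).
    assert (HPabc : forall k, qprod_pos (q * q / (a * b * c)) q k <> 0).
    { intros k. pose proof (HS k) as H.
      repeat (apply Cmult_neq_0_inv in H; destruct H as [H ?]). auto. }
    destruct Habc as [Ea|[Eb|Ec]].
    + destruct (id2_core q a b c d e N Ea Hq Hb0 Hc0 Hd0 He0 H1a H1b H1c H1d H1e HPb HPc HPd HPe HPabc Hinf) as [S [H1 H2]].
      exists S. split; [exact H1 | exact H2].
    + assert (HPabc' : forall k, qprod_pos (q * q / (b * a * c)) q k <> 0).
      { intros k. replace (b * a * c) with (a * b * c) by ring. auto. }
      assert (Hinf' : qpoch_inf (b * q) q * qpoch_inf (a * q) q * qpoch_inf (c * q) q * qpoch_inf (b * a * c / q) q <> 0).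
      { replace (b * a * c) with (a * b * c) by ring.
        replace (qpoch_inf (b * q) q * qpoch_inf (a * q) q) with (qpoch_inf (a * q) q * qpoch_inf (b * q) q) by ring. auto. }
      destruct (id2_core q b a c d e N Eb Hq Ha0 Hc0 Hd0 He0 H1b H1a H1c H1d H1e HPa HPc HPd HPe HPabc' Hinf') as [S [H1 H2]].
      exists S. split.
      * eapply is_series_ext; [|exact H1]. intros k. exact (St2_p12 q a b c d e k).
      * rewrite PF2_p12 in H2. eapply bil_ext; [|exact H2]. intros k. exact (bil2_p12 q a b c d e k).
    + assert (HPabc' : forall k, qprod_pos (q * q / (c * b * a)) q k <> 0).
      { intros k. replace (c * b * a) with (a * b * c) by ring. auto. }
      assert (Hinf' : qpoch_inf (c * q) q * qpoch_inf (b * q) q * qpoch_inf (a * q) q * qpoch_inf (c * b * a / q) q <> 0).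
      { replace (c * b * a) with (a * b * c) by ring.
        replace (qpoch_inf (c * q) q * qpoch_inf (b * q) q * qpoch_inf (a * q) q) with (qpoch_inf (a * q) q * qpoch_inf (b * q) q * qpoch_inf (c * q) q) by ring. auto. }
      destruct (id2_core q c b a d e N Ec Hq Hb0 Ha0 Hd0 He0 H1c H1b H1a H1d H1e HPb HPa HPd HPe HPabc' Hinf') as [S [H1 H2]].
      exists S. split.
      * eapply is_series_ext; [|exact H1]. intros k. exact (St2_p13 q a b c d e k).
      * rewrite PF2_p13 in H2. eapply bil_ext; [|exact H2]. intros k. exact (bil2_p13 q a b c d e k).
Qed.
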